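(* Let $\mathcal M,\widehat{\mathcal M}\subset\mathbb R^D$ be closed embedded submanifolds with $\mathrm{reach}(\mathcal M)\ge\zeta_{\min}$, $\mathrm{reach}(\widehat{\mathcal M})\ge\zeta_{\min}$ and $d_H(\mathcal M,\widehat{\mathcal M})\le\varepsilon$, for some $\zeta_{\min}>0$ and $\varepsilon\in(0,\zeta_{\min}/4)$. Fix $r\in(0,\zeta_{\min}-2\varepsilon)$ and let $\pi,\hat\pi$ be the nearest-point projections onto $\mathcal M$ and $\widehat{\mathcal M}$ on $\mathcal T_{\zeta_{\min}}(\mathcal M)$ and $\mathcal T_{\zeta_{\min}}(\widehat{\mathcal M})$ respectively. Then for every $x\in\mathcal T_r(\mathcal M)$, both $\pi(x)$ and $\hat\pi(x)$ are well defined and \[\|\pi(x)-\hat\pi(x)\|\le\varepsilon+2\sqrt{\frac{\operatorname{dist}(x,\mathcal M)\varepsilon+\varepsilon^2}{1-(\operatorname{dist}(x,\mathcal M)+\varepsilon)/\zeta_{\min}}}.\] Consequently $\sup_{x\in\mathcal T_r(\mathcal M)}\|\pi(x)-\hat\pi(x)\|\le\varepsilon+2\sqrt{\frac{r\varepsilon+\varepsilon^2}{1-(r+\varepsilon)/\zeta_{\min}}}\lesssim_{\zeta_{\min},r}\sqrt\varepsilon$.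
   Context: Reach: largest $r$ such that every point at distance $<r$ has a unique nearest point. $\mathcal T_r(\mathcal M):=\{x:\operatorname{dist}(x,\mathcal M)<r\}$. $d_H$ is the Hausdorff distance. *)

(* Defs.v *)
From HB Require Import structures.
From mathcomp Require Import all_boot all_order all_algebra.
From mathcomp Require Import all_classical all_reals all_analysis.
Set Implicit Arguments. Unset Strict Implicit. Unset Printing Implicit Defensive.
Import Order.TTheory GRing.Theory Num.Theory.
Import numFieldNormedType.Exports.
Local Open Scope classical_set_scope.
Local Open Scope ring_scope.

Section Defs.
Variables (R : realType) (D : nat).
Local Notation V := 'rV[R]_D.

(* Euclidean norm on R^D (the library norm on matrices is the sup norm). *)
Definition norm2 (v : V) : R := Num.sqrt (\sum_(i < D) v ord0 i ^+ 2).

(* dist(x, A) = inf_{a in A} |x - a| (= +oo when A is empty). *)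
Definition dist (x : V) (A : set V) : \bar R :=
  ereal_inf [set (norm2 (x - a))%:E | a in A].

Definition hausdorff_dist (A B : set V) : \bar R :=
  maxe (ereal_sup [set dist a B | a in A]) (ereal_sup [set dist b A | b in B]).

Definition tube (A : set V) (r : R) : set V := [set x | (dist x A < r%:E)%E].

Definition nearest (A : set V) (x p : V) : Prop :=
  A p /\ forall q, A q -> norm2 (x - p) <= norm2 (x - q).

Definition unique_nearest (A : set V) (x : V) : Prop :=
  exists! p, nearest A x p.

Definition reach (A : set V) : \bar R :=
  ereal_sup [set r%:E | r in [set r : R | 0 <= r /\
     forall x, (dist x A < r%:E)%E -> unique_nearest A x]].

Fixpoint iterD (m : nat) (vs : seq V) (F : V -> 'rV[R]_m) : V -> 'rV[R]_m :=
  match vs with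
  | [::] => F
  | v :: vs' => fun y => 'D_v (iterD vs' F) y
  end.

Definition smooth_on (m : nat) (U : set V) (F : V -> 'rV[R]_m) : Prop :=
  forall vs y, U y -> differentiable (iterD vs F) y.

(* Smooth embedded submanifold of R^D (of some dimension d <= D):
   locally a regular level set of a smooth submersion. *)
Definition embedded_submanifold (M : set V) : Prop :=
  exists d : nat, (d <= D)%N /\
  forall p, M p -> exists U : set V, [/\ open U, U p &
    exists F : V -> 'rV[R]_(D - d),
      [/\ smooth_on U F,
          (forall y, U y -> forall w, exists u, 'd F y u = w) &
          (forall y, U y -> (M y <-> F y = 0))]].
End Defs.

(* Main.v *)
Require Import Defs.
From HB Require Import structures.
From mathcomp Require Import all_boot all_order all_algebra.
From mathcomp Require Import all_classical all_reals all_analysis.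
From mathcomp Require Import ring lra zify.
Import Order.TTheory GRing.Theory Num.Theory.
Import numFieldNormedType.Exports.
Local Open Scope classical_set_scope.
Local Open Scope ring_scope.

Set Implicit Arguments. Unset Strict Implicit. Unset Printing Implicit Defensive.

Section Eucl.
Variables (R : realType) (D : nat).
Local Notation V := 'rV[R]_D.
Local Notation n2 := (@norm2 R D).

Definition dot (u v : V) : R := \sum_(i < D) u ord0 i * v ord0 i.

Lemma dotC u v : dot u v = dot v u.
Proof. by apply: eq_bigr => i _; rewrite mulrC. Qed.
Lemma dotDl u v w : dot (u + v) w = dot u w + dot v w.
Proof. by rewrite /dot -big_split; apply: eq_bigr => i _; rewrite mxE mulrDl. Qed.
Lemma dotDr u v w : dot w (u + v) = dot w u + dot w v.
Proof. by rewrite dotC dotDl !(dotC w). Qed.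
Lemma dotZl k u v : dot (k *: u) v = k * dot u v.
Proof. by rewrite /dot mulr_sumr; apply: eq_bigr => i _; rewrite mxE mulrA. Qed.
Lemma dotZr k u v : dot v (k *: u) = k * dot v u.
Proof. by rewrite dotC dotZl dotC. Qed.
Lemma dotNl u v : dot (- u) v = - dot u v.
Proof. by rewrite -scaleN1r dotZl mulN1r. Qed.
Lemma dotNr u v : dot v (- u) = - dot v u.
Proof. by rewrite dotC dotNl dotC. Qed.
Lemma dotBl u v w : dot (u - v) w = dot u w - dot v w.
Proof. by rewrite dotDl dotNl. Qed.
Lemma dotBr u v w : dot w (u - v) = dot w u - dot w v.
Proof. by rewrite dotDr dotNr. Qed.
Lemma dot0l v : dot 0 v = 0.
Proof. by rewrite /dot big1 // => i _; rewrite mxE mul0r. Qed.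
Lemma dot_ge0 v : 0 <= dot v v.
Proof. by rewrite /dot; apply: sumr_ge0 => i _; rewrite -expr2 sqr_ge0. Qed.
Lemma dot_eq0 v : dot v v = 0 -> v = 0.
Proof.
move=> /eqP; rewrite psumr_eq0 => [/allP H|i _]; last by rewrite -expr2 sqr_ge0.
apply/rowP => i; rewrite mxE; have := H i (mem_index_enum i).
by rewrite /= mulf_eq0 orbb => /eqP.
Qed.
Lemma n2_sq v : n2 v ^+ 2 = dot v v.
Proof. by rewrite /norm2 sqr_sqrtr // -/(dot v v) dot_ge0. Qed.
Lemma n2_ge0 v : 0 <= n2 v.
Proof. exact: sqrtr_ge0. Qed.
Lemma n2_eq0 v : n2 v = 0 -> v = 0.
Proof. by move=> h; apply: dot_eq0; rewrite -n2_sq h expr0n. Qed.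
Lemma n2_0 : n2 0 = 0.
Proof. by rewrite /norm2 -/(dot 0 0) dot0l sqrtr0. Qed.

Lemma CS u v : dot u v <= n2 u * n2 v.
Proof.
have [a0'|an0] := eqVneq (n2 u) 0.
  by rewrite a0' mul0r (n2_eq0 a0') dot0l.
have [b0'|bn0] := eqVneq (n2 v) 0.
  by rewrite b0' mulr0 (n2_eq0 b0') dotC dot0l.
have h := dot_ge0 (n2 v *: u - n2 u *: v).
rewrite !(dotBl, dotBr, dotZl, dotZr) -!n2_sq (dotC v u) in h.
have a0 : 0 < n2 u by rewrite lt_def an0 n2_ge0.
have b0 : 0 < n2 v by rewrite lt_def bn0 n2_ge0.
have ab : 0 < n2 u * n2 v by rewrite mulr_gt0.
nra.
Qed.

Lemma n2_sqD u v : n2 (u + v) ^+ 2 = n2 u ^+ 2 + 2 * dot u v + n2 v ^+ 2.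
Proof. by rewrite !n2_sq !(dotDl, dotDr) (dotC v u); ring. Qed.
Lemma n2_sqB u v : n2 (u - v) ^+ 2 = n2 u ^+ 2 - 2 * dot u v + n2 v ^+ 2.
Proof. by rewrite !n2_sq !(dotBl, dotBr) (dotC v u); ring. Qed.

Lemma le_n2 (x y : R) : 0 <= y -> x ^+ 2 <= y ^+ 2 -> 0 <= x -> x <= y.
Proof. move=> y0 h x0; nra. Qed.

Lemma n2_triangle u v : n2 (u + v) <= n2 u + n2 v.
Proof.
apply: le_n2; rewrite ?addr_ge0 ?n2_ge0 //.
rewrite n2_sqD; have := CS u v; nra.
Qed.

Lemma n2Z k v : n2 (k *: v) = `|k| * n2 v.
Proof.
apply/eqP; rewrite -(@eqrXn2 _ 2) ?mulr_ge0 ?n2_ge0 //.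
by rewrite exprMn real_normK ?num_real // !n2_sq dotZl dotZr mulrA -expr2.
Qed.
Lemma n2N v : n2 (- v) = n2 v.
Proof. by rewrite -scaleN1r n2Z normrN normr1 mul1r. Qed.
Lemma n2B u v : n2 (u - v) = n2 (v - u).
Proof. by rewrite -n2N opprB. Qed.
Lemma n2_tri3 u v w : n2 (u - w) <= n2 (u - v) + n2 (v - w).
Proof. by have := n2_triangle (u - v) (v - w); rewrite addrA subrK. Qed.

Lemma coord_le_n2 (v : V) i : `|v ord0 i| <= n2 v.
Proof.
apply: le_n2; rewrite ?n2_ge0 // n2_sq real_normK ?num_real //.
rewrite /dot (bigD1 i) //= -expr2 lerDl sumr_ge0 // => j _.
by rewrite -expr2 sqr_ge0.
Qed.

Lemma mxnorm_le_n2 (v : V) : `|v| <= n2 v.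
Proof.
rewrite (_ : `|v| = mx_norm v) // mx_normrE; apply/bigmax_leP; split; first exact: n2_ge0.
by move=> [i j] _ /=; rewrite (ord1 i); apply: coord_le_n2.
Qed.

Lemma n2_le_mxnorm (v : V) : n2 v <= D.+1%:R * `|v|.
Proof.
apply: le_n2; rewrite ?mulr_ge0 ?n2_ge0 // n2_sq.
have h : forall i, v ord0 i * v ord0 i <= `|v| ^+ 2.
  move=> i; rewrite -expr2 -real_normK ?num_real //.
  rewrite lerXn2r ?nnegrE //; rewrite (_ : `|v| = mx_norm v) // mx_normrE.
  by apply: (le_trans _ (le_bigmax _ _ (ord0, i))).
apply: (le_trans (ler_sum _ (fun i _ => h i))).
rewrite sumr_const card_ord exprMn -mulr_natl.
have hD : (D%:R : R) <= D.+1%:R ^+ 2 by rewrite -natrX ler_nat; lia.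
have := sqr_ge0 `|v|; nra.
Qed.

End Eucl.

Section Dist.
Variables (R : realType) (D : nat).
Local Notation V := 'rV[R]_D.
Local Notation n2 := (@norm2 R D).

Lemma n2_lip (a b : V) : `|n2 a - n2 b| <= n2 (a - b).
Proof.
have h1 : n2 a <= n2 (a - b) + n2 b by have := n2_triangle (a - b) b; rewrite subrK.
have h2 : n2 b <= n2 (b - a) + n2 a by have := n2_triangle (b - a) a; rewrite subrK.
rewrite (n2B b a) in h2.
rewrite ler_norml; apply/andP; split; lra.
Qed.

Lemma lip_cont (f : V -> R) (k : R) : 0 <= k ->
  (forall u v, `|f u - f v| <= k * n2 (u - v)) -> continuous f.
Proof.
move=> k0 H x; apply: (proj2 (@cvgrPdist_lt _ _ _ (nbhs x) (nbhs_filter x) f (f x))) => e e0.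
set k' := (k + 1) * D.+1%:R.
have k'0 : 0 < k' by rewrite /k' mulr_gt0 // ?ltr0n //; lra.
have : (fun t : V => t) @ x --> x by exact: cvg_id.
move/cvgrPdist_lt => /(_ (e / k')) []; first by rewrite divr_gt0.
move=> r r0 hr; exists r => // t /hr /= xt.
apply: (le_lt_trans (H x t)).
apply: (le_lt_trans (ler_wpM2l k0 (n2_le_mxnorm (x - t)))).
have : D.+1%:R * `|x - t| < e / k' * D.+1%:R.
  by rewrite mulrC ltr_pM2r // ltr0n.
rewrite /k' invfM mulrA -(mulrA _ _^-1) mulVf ?pnatr_eq0 // mulr1 => h.
have hk : k * (D.+1%:R * `|x - t|) <= (k + 1) * (D.+1%:R * `|x - t|).
  by apply: ler_wpM2r; [rewrite mulr_ge0 ?ler0n //| lra].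
apply: (le_lt_trans hk).
rewrite -ltr_pdivlMl; last lra.
by rewrite [X in _ < X]mulrC.
Qed.

Lemma n2_cont_l (z : V) : continuous (fun b : V => n2 (z - b)).
Proof.
apply: (@lip_cont _ 1) => // u v; rewrite mul1r.
have e : z - u - (z - v) = v - u by rewrite opprB addrC addrA subrK.
by apply: (le_trans (n2_lip _ _)); rewrite e n2B.
Qed.

Lemma n2_cont_r (z : V) : continuous (fun b : V => n2 (b - z)).
Proof.
apply: (@lip_cont _ 1) => // u v; rewrite mul1r.
have e : u - z - (v - z) = u - v by rewrite opprB addrA subrK.
by apply: (le_trans (n2_lip _ _)); rewrite e.
Qed.

Definition rho (A : set V) (z : V) : R := fine (dist z A).

Variable A : set V.

Lemma dist_ge0 z : (0 <= dist z A)%E.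
Proof. by apply: le_ereal_inf_tmp => _ [a _ <-]; rewrite lee_fin n2_ge0. Qed.

Lemma dist_le z a : A a -> (dist z A <= (n2 (z - a))%:E)%E.
Proof. by move=> Aa; apply: ereal_inf_lbound; exists a. Qed.

Lemma dist_fin z a0 : A a0 -> dist z A = (rho A z)%:E.
Proof.
move=> Aa0; rewrite /rho fineK // ge0_fin_numE ?dist_ge0 //.
by apply: (le_lt_trans (dist_le z Aa0)); rewrite ltry.
Qed.

Lemma rho_lb z a : A a -> rho A z <= n2 (z - a).
Proof. by move=> Aa; rewrite -lee_fin -(dist_fin z Aa) dist_le. Qed.

Lemma rho_glb z a0 m : A a0 -> (forall a, A a -> m <= n2 (z - a)) -> m <= rho A z.
Proof.
move=> Aa0 H; rewrite -lee_fin -(dist_fin z Aa0).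
by apply: le_ereal_inf_tmp => _ [a Aa <-]; rewrite lee_fin H.
Qed.

Lemma rho_ge0 z : 0 <= rho A z.
Proof. by rewrite /rho fine_ge0 // dist_ge0. Qed.

Lemma rho_lip z w a0 : A a0 -> rho A z <= rho A w + n2 (z - w).
Proof.
move=> Aa0; rewrite -lerBlDr; apply: (@rho_glb w a0 _ Aa0) => a Aa.
rewrite lerBlDr; apply: (le_trans (rho_lb z Aa)).
by rewrite [leRHS]addrC; apply: n2_tri3.
Qed.

Lemma rho_nearest z b : nearest A z b -> rho A z = n2 (z - b).
Proof.
move=> [Ab Hb]; apply/eqP; rewrite eq_le rho_lb //=.
by apply: (@rho_glb z b _ Ab).
Qed.

Lemma rho_cont a0 : A a0 -> continuous (rho A).
Proof.
move=> Aa0; apply: (@lip_cont _ 1) => // u v; rewrite mul1r ler_norml.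
have := rho_lip u v Aa0; have := rho_lip v u Aa0; rewrite (n2B v u).
move=> h1 h2; apply/andP; split; lra.
Qed.

Lemma reach_un (zeta : R) x : (zeta%:E <= reach A)%E -> (dist x A < zeta%:E)%E ->
  unique_nearest A x.
Proof.
move=> hz hx; apply: contrapT => hn.
have : (reach A <= dist x A)%E.
  apply: ge_ereal_sup => _ [r [r0 Hr] <-].
  rewrite leNgt; apply/negP => /Hr; exact: hn.
move=> h; have := le_trans hz h; rewrite leNgt hx //.
Qed.

End Dist.

Section Proj.
Variables (R : realType) (D : nat).
Local Notation V := 'rV[R]_D.
Local Notation n2 := (@norm2 R D).
Variable A : set V.
Hypothesis Acl : closed A.

Lemma proj_sep z0 b0 : nearest A z0 b0 -> (forall b, nearest A z0 b -> b = b0) ->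
  forall delta, 0 < delta -> exists m, n2 (z0 - b0) < m /\
    forall b, A b -> delta <= n2 (b - b0) -> m <= n2 (z0 - b).
Proof.
move=> [Ab0 Hb0] U delta d0.
set r0 := n2 (z0 - b0).
set K := A `&` [set b | n2 (z0 - b) <= r0 + 1] `&` [set b | delta <= n2 (b - b0)].
case: (pselect (K !=set0)) => [K0|K0]; last first.
  exists (r0 + 1); split; first lra.
  move=> b Ab hb; rewrite leNgt; apply/negP => hlt; apply: K0; exists b.
  by split; [split|] => //=; apply: ltW.
have cK : compact K.
  apply: bounded_closed_compact.
    exists (n2 z0 + r0 + 1); split; first exact: num_real.
    move=> M hM b [[Ab hb1] hb2].
    apply: (le_trans (mxnorm_le_n2 b)); apply: ltW; apply: le_lt_trans hM.
    move: hb1 => /= hb1; have := n2_tri3 b z0 0; rewrite !subr0 (n2B b z0); lra.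
  apply: closedI; first apply: closedI => //.
    exact: (@preimage_closed _ _ (fun b : V => n2 (z0 - b)) [set x : R | x <= r0 + 1]
      (fun x _ => @n2_cont_l _ _ z0 x) (@closed_le R (r0 + 1))).
  exact: (@preimage_closed _ _ (fun b : V => n2 (b - b0)) [set x : R | delta <= x]
      (fun x _ => @n2_cont_r _ _ b0 x) (@closed_ge R delta)).
have [c cinK cmin] := compact_EVT_min K0 cK (continuous_subspaceT (@n2_cont_l _ _ z0)).
move: cinK; rewrite inE => -[[Ac hc1] hc2].
have hc : r0 < n2 (z0 - c).
  rewrite lt_def Hb0 // andbT; apply/eqP => e.
  have := U c; rewrite /nearest /r0 e => /(_ (conj Ac Hb0)) ec.
  by move: hc2 => /=; rewrite ec subrr n2_0 leNgt d0.
exists (Order.min (n2 (z0 - c)) (r0 + 1)); split.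
  by rewrite lt_min hc; lra.
move=> b Ab hb; have [h1|h1] := leP (n2 (z0 - b)) (r0 + 1).
  rewrite ge_min; apply/orP; left; apply: cmin; rewrite inE.
  by split; [split|].
by rewrite ge_min; apply/orP; right; apply: ltW.
Qed.

Lemma proj_cont z0 b0 : nearest A z0 b0 -> (forall b, nearest A z0 b -> b = b0) ->
  forall delta, 0 < delta -> exists2 eta, 0 < eta &
    forall w b, n2 (w - z0) < eta -> nearest A w b -> n2 (b - b0) < delta.
Proof.
move=> Hn U delta d0.
have [m [hm Hm]] := proj_sep Hn U d0.
exists ((m - n2 (z0 - b0)) / 2); first lra.
move=> w b hw [Ab Hb]; rewrite ltNge; apply/negP => hb.
have := Hm b Ab hb.
have h1 := n2_tri3 z0 w b.
have h2 := Hb b0 Hn.1.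
have h3 := n2_tri3 w z0 b0.
rewrite (n2B z0 w) in h1.
lra.
Qed.

End Proj.

Section Ray.
Variables (R : realType) (D : nat).
Local Notation V := 'rV[R]_D.
Local Notation n2 := (@norm2 R D).

Lemma seg_nearest (A : set V) z b (l : R) : nearest A z b -> 0 <= l -> l <= 1 ->
  nearest A (b + l *: (z - b)) b.
Proof.
move=> [Ab Hb] l0 l1; split => // q Aq.
have e1 : b + l *: (z - b) - b = l *: (z - b) by rewrite addrAC subrr add0r.
have e2 : z - (b + l *: (z - b)) = (1 - l) *: (z - b).
  by rewrite scalerBl scale1r opprD addrA.
have := n2_tri3 z (b + l *: (z - b)) q.
rewrite e1 e2 !n2Z (ger0_norm l0) (ger0_norm (_ : 0 <= 1 - l)); last lra.
have := Hb q Aq; nra.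
Qed.

Variables (A : set V) (zeta : R).
Hypothesis Acl : closed A.
Hypothesis Hun : forall w, (dist w A < zeta%:E)%E -> unique_nearest A w.

Lemma un_of w a : A a -> n2 (w - a) < zeta ->
  exists b, nearest A w b /\ forall b', nearest A w b' -> b' = b.
Proof.
move=> Aa h.
have h' : (dist w A < zeta%:E)%E.
  by apply: (le_lt_trans (dist_le w Aa)); rewrite lte_fin.
have [b [hb U]] := Hun h'.
by exists b; split => // b' /U ->.
Qed.


Lemma step p u t c : n2 u = 1 -> 0 < t -> t < zeta -> nearest A (p + t *: u) p ->
  0 < c -> c <= 1/2 -> 2 * c * t < (zeta - t) / 2 * (1 - c) ->
  nearest A (p + (t / (1 - c)) *: u) p.
Proof.
move=> u1 t0 tz Hy c0 c1 hc.
set y := p + t *: u.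
set r := (zeta - t) / 2.
have r0 : 0 < r by rewrite /r; lra.
have rt : r + t < zeta by rewrite /r; lra.
have Ap : A p := Hy.1.
have ty : n2 (y - p) = t.
  by rewrite /y addrAC subrr add0r n2Z u1 mulr1 gtr0_norm.
have rhoy : rho A y = t by rewrite (rho_nearest Hy) ty.
set B := [set z | n2 (z - y) <= r].
have B0 : B !=set0 by exists y; rewrite /B /= subrr (@n2_0 R D); lra.
have cB : compact B.
  apply: bounded_closed_compact.
    exists (n2 y + r); split; first exact: num_real.
    move=> M hM z /= hz.
    apply: (le_trans (mxnorm_le_n2 z)); apply: ltW; apply: le_lt_trans hM.
    move: hz; rewrite /B /= => hz; have := n2_tri3 z y 0; rewrite !subr0; lra.
  exact: (@preimage_closed _ _ (fun z : V => n2 (z - y)) [set x : R | x <= r]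
      (fun x _ => @n2_cont_r _ _ y x) (@closed_le R r)).
set G := fun z => n2 (z - y) * n2 (z - y) - c * (rho A z * rho A z).
have Gc : continuous G.
  move=> x.
  have cc1 : {for x, continuous (fun z : V => n2 (z - y) * n2 (z - y))}.
    exact: (continuousM (@n2_cont_r _ _ y x) (@n2_cont_r _ _ y x)).
  have cr : {for x, continuous (fun z : V => rho A z * rho A z)}.
    exact: (continuousM (@rho_cont _ _ A p Ap x) (@rho_cont _ _ A p Ap x)).
  have cc2 : {for x, continuous (fun z : V => c * (rho A z * rho A z))}.
    exact: (continuousM (@cvg_cst _ c _ (nbhs x) _) cr).
  exact: (continuousB cc1 cc2).
have [z zB zmin] := compact_EVT_min B0 cB (continuous_subspaceT Gc).
move: zB; rewrite inE /B /= => zB.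
have hzmin : forall z', n2 (z' - y) <= r -> G z <= G z'.
  by move=> z' h; apply: zmin; rewrite inE.
have rz0 := @rho_ge0 R D A z.
have rzle : rho A z <= t + n2 (z - y).
  by have := @rho_lip R D A z y p Ap; rewrite rhoy.
have zint : n2 (z - y) < r.
  rewrite lt_def zB andbT; apply/eqP => e.
  have := hzmin y; rewrite subrr (@n2_0 R D) => /(_ (ltW r0)).
  rewrite /G /= -e rhoy subrr (@n2_0 R D) => hG.
  have h2 : rho A z * rho A z <= (t + r) * (t + r) by nra.
  have hc' : 2 * c * t < r * (1 - c) by rewrite /r.
  have k : 0 < r * (r * (1 - c) - 2 * c * t) by apply: mulr_gt0; lra.
  have k2 := ler_wpM2l (ltW c0) h2.
  nra.
have [b [Hb Ub]] : exists b, nearest A z b /\ forall b', nearest A z b' -> b' = b.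
  apply: (un_of Ap); have := n2_tri3 z y p; rewrite ty; lra.
have rzb : rho A z = n2 (z - b) := rho_nearest Hb.
set v := c *: (z - b) - (z - y).
have v0 : v = 0.
  case: (eqVneq v 0) => // vn0; exfalso.
  have nv : 0 < n2 v.
    by rewrite lt_def n2_ge0 andbT; apply/eqP => /n2_eq0 /eqP; rewrite (negbTE vn0).
  have d4 : 0 < n2 v / 4 by lra.
  have [eta eta0 Heta] := proj_cont Acl Hb Ub d4.
  set s := Order.min eta (r - n2 (z - y)) / 2.
  have s0 : 0 < s by rewrite /s divr_gt0 // lt_min eta0 /=; lra.
  have s1 : s < eta by rewrite /s; have := ge_min eta eta (r - n2 (z - y)); rewrite lexx /=; lra.
  have s2 : s < r - n2 (z - y).
    by rewrite /s; have := ge_min (r - n2 (z - y)) eta (r - n2 (z - y)); rewrite lexx orbT /=; lra.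
  set tau := Order.min (1/2) (s / n2 v).
  have tau0 : 0 < tau by rewrite /tau lt_min; apply/andP; split; [lra | apply: divr_gt0].
  have tau1 : tau <= 1/2 by rewrite /tau ge_min lexx.
  have htv : tau * n2 v <= s.
    by rewrite -ler_pdivlMr // /tau ge_min lexx orbT.
  set z' := z + tau *: v.
  have ez' : z' - z = tau *: v by rewrite /z' addrAC subrr add0r.
  have nz' : n2 (z' - z) = tau * n2 v by rewrite ez' n2Z gtr0_norm.
  have z'B : n2 (z' - y) <= r.
    have := n2_tri3 z' z y; rewrite nz'; lra.
  have [b' [Hb' _]] : exists b', nearest A z' b' /\ forall b'', nearest A z' b'' -> b'' = b'.
    apply: (un_of Ap); have := n2_tri3 z' y p; rewrite ty; lra.
  have hbb : n2 (b' - b) < n2 v / 4.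
    by apply: (Heta z' b') => //; rewrite nz'; lra.
  have Gle := hzmin z' z'B.
  have rz' : rho A z' = n2 (z' - b') := rho_nearest Hb'.
  have rzl : rho A z <= n2 (z - b') := @rho_lb R D A z b' Hb'.1.
  have E1 : n2 (z' - y) ^+ 2 = n2 (z - y) ^+ 2 + 2 * (tau * dot (z - y) v) + tau ^+ 2 * n2 v ^+ 2.
    have -> : z' - y = (z - y) + tau *: v by rewrite /z' addrAC.
    by rewrite n2_sqD dotZr n2Z gtr0_norm // exprMn.
  have E2 : n2 (z' - b') ^+ 2 = n2 (z - b') ^+ 2 + 2 * (tau * dot (z - b') v) + tau ^+ 2 * n2 v ^+ 2.
    have -> : z' - b' = (z - b') + tau *: v by rewrite /z' addrAC.
    by rewrite n2_sqD dotZr n2Z gtr0_norm // exprMn.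
  have L : n2 v ^+ 2 = c * dot (z - b) v - dot (z - y) v.
    by rewrite n2_sq {1}/v dotBl dotZl.
  have M : dot (z - b') v = dot (z - b) v + dot (b - b') v.
    by rewrite -dotDl addrA subrK.
  have CSb : - dot (b - b') v <= n2 (b' - b) * n2 v.
    by rewrite -dotNl opprB; apply: CS.
  move: Gle; rewrite /G rz' -!expr2 => Gle.
  have rzl2 : rho A z ^+ 2 <= n2 (z - b') ^+ 2.
    by rewrite lerXn2r ?nnegrE ?n2_ge0.
  set a := dot (z - y) v in E1 L.
  set g := dot (z - b) v in L M.
  set h := dot (b - b') v in M CSb.
  set N := n2 v ^+ 2 in E1 E2 L.
  set gg := dot (z - b') v in E2 M.
  have k1 : 0 <= tau * (2 * a + tau * N - 2 * c * gg - c * tau * N).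
    have := ler_wpM2l (ltW c0) rzl2; nra.
  have k2 : 0 <= 2 * a + tau * N - 2 * c * gg - c * tau * N.
    by rewrite -(pmulr_rge0 _ tau0).
  have hN : N = n2 v * n2 v by rewrite /N expr2.
  have k3 : - h <= N / 4 by nra.
  have k4 : tau * N <= N / 2 by nra.
  have k5 : 0 <= c * tau * N by apply: mulr_ge0; [apply: mulr_ge0; lra | rewrite /N; exact: sqr_ge0].
  have k6 : - (c * h) <= N / 8 by nra.
  nra.
have e : c *: (z - b) = z - y by apply/eqP; rewrite -subr_eq0 -/v v0.
have ei : forall i, c * (z ord0 i - b ord0 i) = z ord0 i - y ord0 i.
  by move=> i; have := congr1 (fun M : V => M ord0 i) e; rewrite !mxE.
have ey : y = b + (1 - c) *: (z - b).
  by apply/rowP => i; have := ei i; rewrite !mxE; lra.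
have Hyb : nearest A y b by rewrite ey; apply: seg_nearest => //; lra.
have hyp : n2 (y - p) < zeta by rewrite ty.
have [b0 [_ U0]] := un_of Ap hyp.
have ebp : b = p by rewrite (U0 _ Hyb) (U0 _ Hy).
move: Hb; rewrite ebp => Hb.
have h1c : 1 - c != 0 by apply/eqP; lra.
suff -> : p + (t / (1 - c)) *: u = z by [].
apply/rowP => i; have := ei i; rewrite ebp /y !mxE => hi.
apply: (mulIf h1c); rewrite mulrDl [X in _ + X = _]mulrAC divfK //; lra.
Qed.

End Ray.

Section Ray2.
Variables (R : realType) (D : nat).
Local Notation V := 'rV[R]_D.
Local Notation n2 := (@norm2 R D).
Variables (A : set V) (zeta : R).
Hypothesis Acl : closed A.
Hypothesis Hun : forall w, (dist w A < zeta%:E)%E -> unique_nearest A w.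

Lemma ray p x : nearest A x p -> 0 < n2 (x - p) -> forall s, 0 <= s -> s < zeta ->
  nearest A (p + (s / n2 (x - p)) *: (x - p)) p.
Proof.
move=> Hx d0 s s0 sz; set d := n2 (x - p).
case: (leP s d) => sd.
  apply: seg_nearest => //; first by rewrite divr_ge0 // ltW.
  by rewrite ler_pdivrMr // mul1r.
set u := d^-1 *: (x - p).
have u1 : n2 u = 1 by rewrite /u n2Z ger0_norm ?invr_ge0 ?(ltW d0) // mulVf // gt_eqF.
have eu : forall t, p + (t / d) *: (x - p) = p + t *: u by move=> t; rewrite /u scalerA.
have z0 : 0 < zeta by lra.
set c := (zeta - s) / (8 * zeta).
have hc8 : c * zeta = (zeta - s) / 8 by rewrite /c; field; lra.
have c0 : 0 < c by rewrite /c divr_gt0 //; lra.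
have c1 : c <= 1/8 by rewrite /c ler_pdivrMr; lra.
have stepc : forall t, 0 < t -> t < s -> nearest A (p + t *: u) p ->
    nearest A (p + (t / (1 - c)) *: u) p.
  move=> t t0 ts Ht; apply: (step Acl Hun) => //; try lra.
  have : c * t < c * zeta by rewrite ltr_pM2l //; lra.
  nra.
have P : forall k : nat, exists t, (d + k%:R * (c * d) <= t \/ s <= t) /\
    0 < t /\ t < zeta /\ nearest A (p + t *: u) p.
  elim => [|k [t [ht [t0 [tz Ht]]]]].
    exists d; rewrite mul0r addr0 lexx; split; first by left.
    do 2!split => //; first lra.
    by rewrite /u scalerA mulfV ?gt_eqF // scale1r addrC subrK.
  case: (leP s t) => st; first by exists t; split => //; right.
  have tle : d + k%:R * (c * d) <= t by case: ht => // h; lra.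
  have h1c : 1 - c != 0 by apply/eqP; lra.
  have hw : t / (1 - c) * (1 - c) = t by rewrite divfK.
  have w0 : 0 < t / (1 - c) by rewrite divr_gt0 //; lra.
  exists (t / (1 - c)); split; last split => //; last split.
  - left; rewrite -natr1 mulrDl mul1r addrA.
    have : 0 <= k%:R * (c * d) by rewrite mulr_ge0 // mulr_ge0 // ltW.
    nra.
  - nra.
  - by apply: stepc.
have hcd : 0 < c * d by rewrite mulr_gt0.
have [t [ht [t0 [tz Ht]]]] := P (Num.bound (s / (c * d))).
have st : s <= t.
  case: ht => // h.
  have hb := archi_boundP (divr_ge0 s0 (ltW hcd)).
  have : s < (Num.bound (s / (c * d)))%:R * (c * d) by rewrite -ltr_pdivrMr.
  nra.
have := seg_nearest Ht (_ : 0 <= s / t) (_ : s / t <= 1).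
rewrite addrAC subrr add0r scalerA divfK ?gt_eqF // -eu; apply.
  by rewrite divr_ge0 // ltW.
by rewrite ler_pdivrMr // mul1r.
Qed.

Lemma key p x q : nearest A x p -> A q -> forall s, 0 <= s -> s < zeta ->
  2 * s * dot (x - p) (q - p) <= n2 (x - p) * n2 (q - p) ^+ 2.
Proof.
move=> Hx Aq s s0 sz.
have [d0|dn0] := eqVneq (n2 (x - p)) 0.
  by rewrite d0 (n2_eq0 d0) dot0l mulr0 mul0r.
have d0 : 0 < n2 (x - p) by rewrite lt_def dn0 n2_ge0.
have [_ Hw] := ray Hx d0 s0 sz.
have := Hw q Aq.
set l := s / n2 (x - p).
have e1 : p + l *: (x - p) - p = l *: (x - p) by rewrite addrAC subrr add0r.
have e2 : p + l *: (x - p) - q = l *: (x - p) - (q - p).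
  by apply/rowP => i; rewrite !mxE; lra.
rewrite e1 e2 => h.
have h2 : n2 (l *: (x - p)) ^+ 2 <= n2 (l *: (x - p) - (q - p)) ^+ 2.
  by rewrite lerXn2r ?nnegrE ?n2_ge0.
rewrite n2_sqB dotZl -addrA lerDl in h2.
have el : s = l * n2 (x - p) by rewrite /l divfK.
rewrite el.
have hh : 2 * (l * dot (x - p) (q - p)) <= n2 (q - p) ^+ 2 by lra.
have := ler_wpM2l (ltW d0) hh.
nra.
Qed.

End Ray2.

Unset Implicit Arguments. Set Strict Implicit. Set Printing Implicit Defensive.

Theorem lemmaE3 (R : realType) (D : nat) (M Mh : set 'rV[R]_D)
    (zeta eps r : R) :
  closed M -> closed Mh ->
  embedded_submanifold M -> embedded_submanifold Mh ->
  0 < zeta ->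
  (zeta%:E <= reach M)%E -> (zeta%:E <= reach Mh)%E ->
  0 < eps -> eps < zeta / 4 ->
  (hausdorff_dist M Mh <= eps%:E)%E ->
  0 < r -> r < zeta - 2 * eps ->
  forall x, tube M r x ->
    [/\ unique_nearest M x, unique_nearest Mh x &
        forall p ph, nearest M x p -> nearest Mh x ph ->
          norm2 (p - ph) <= eps + 2 * Num.sqrt
            ((fine (dist x M) * eps + eps ^+ 2)
               / (1 - (fine (dist x M) + eps) / zeta))
          /\ norm2 (p - ph) <= eps + 2 * Num.sqrt
            ((r * eps + eps ^+ 2) / (1 - (r + eps) / zeta))].
Proof.
move=> Mcl Mhcl _ _ z0 hM hMh e0 ez hH r0 rz x hx.
have HunM := fun w => @reach_un R D M zeta w hM.
have HunMh := fun w => @reach_un R D Mh zeta w hMh.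
rewrite /tube /= in hx.
have hxz : (dist x M < zeta%:E)%E by apply: (lt_le_trans hx); rewrite lee_fin; lra.
have unx := HunM x hxz.
have [p0 [Hp0 _]] := unx.
have H1 : forall a, M a -> (dist a Mh <= eps%:E)%E.
  move=> a Ma; apply: le_trans hH; rewrite /hausdorff_dist le_max; apply/orP; left.
  by apply: ereal_sup_ubound; exists a.
have H2 : forall b, Mh b -> (dist b M <= eps%:E)%E.
  move=> b Mb; apply: le_trans hH; rewrite /hausdorff_dist le_max; apply/orP; right.
  by apply: ereal_sup_ubound; exists b.
have ezz : (eps%:E < zeta%:E)%E by rewrite lte_fin; lra.
have [b0 [Hb0 _]] := HunMh p0 (le_lt_trans (H1 p0 Hp0.1) ezz).
have rb0 : norm2 (p0 - b0) <= eps.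
  by rewrite -lee_fin -(rho_nearest Hb0) -(dist_fin _ Hb0.1); apply: H1; exact: Hp0.1.
have d0 : norm2 (x - p0) < r.
  by rewrite -lte_fin -(rho_nearest Hp0) -(dist_fin _ Hp0.1).
have unxh : unique_nearest Mh x.
  apply: HunMh; apply: (le_lt_trans (dist_le x Hb0.1)); rewrite lte_fin.
  have := n2_tri3 x p0 b0; lra.
split => // p ph Hp Hph.
set d := norm2 (x - p).
have fd : fine (dist x M) = d by rewrite (dist_fin _ Hp.1) /= (rho_nearest Hp).
rewrite fd.
have dr : d < r by rewrite /d -(rho_nearest Hp) (rho_nearest Hp0).
have d0' : 0 <= d := n2_ge0 _.
have [q [Hq _]] := HunM ph (le_lt_trans (H2 ph Hph.1) ezz).
have rq : norm2 (ph - q) <= eps.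
  by rewrite -lee_fin -(rho_nearest Hq) -(dist_fin _ Hq.1); apply: H2; exact: Hph.1.
have xph : norm2 (x - ph) <= d + eps.
  have := Hph.2 b0 Hb0.1; have := n2_tri3 x p0 b0.
  rewrite -/d -(rho_nearest Hp0) (rho_nearest Hp) -/d; lra.
have xq : norm2 (x - q) <= d + 2 * eps.
  have := n2_tri3 x ph q; lra.
set Q := norm2 (q - p) ^+ 2.
set del := dot (x - p) (q - p).
have den0 : 0 < 1 - (d + eps) / zeta.
  by rewrite subr_gt0 ltr_pdivrMr // mul1r; lra.
have Hdel : 2 * zeta * del <= (d + eps) * Q.
  have [dz|dnz] := eqVneq d 0.
    rewrite /del (n2_eq0 dz) dot0l mulr0 mulr_ge0 //; first lra.
    exact: sqr_ge0.
  have dp : 0 < d by rewrite lt_def dnz d0'.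
  have s0 : 0 <= zeta * d / (d + eps) by rewrite divr_ge0 ?mulr_ge0; lra.
  have s1 : zeta * d / (d + eps) < zeta.
    by rewrite ltr_pdivrMr; [nra | lra].
  have := key Mcl HunM Hp Hq.1 s0 s1.
  rewrite -/d -/del -/Q => hk.
  have e1 : 2 * (zeta * d / (d + eps)) * del * ((d + eps) / d) = 2 * zeta * del.
    by field; apply/andP; split; apply/eqP; lra.
  have e2 : d * Q * ((d + eps) / d) = (d + eps) * Q by field; lra.
  rewrite -e1 -e2; apply: ler_wpM2r => //; by rewrite divr_ge0; lra.
have E : norm2 (x - q) ^+ 2 = d ^+ 2 - 2 * del + Q.
  have -> : x - q = (x - p) - (q - p) by apply/rowP => i; rewrite !mxE; lra.
  by rewrite n2_sqB.
have xq2 : norm2 (x - q) ^+ 2 <= (d + 2 * eps) ^+ 2.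
  by rewrite lerXn2r ?nnegrE ?n2_ge0 //; lra.
set X := d * eps + eps ^+ 2.
set den := 1 - (d + eps) / zeta.
have Qb : Q <= 4 * (X / den).
  rewrite mulrA ler_pdivlMr //.
  have eq : Q * den * zeta = zeta * Q - (d + eps) * Q by rewrite /den; field; lra.
  rewrite -(ler_pM2r z0) eq /X; nra.
have Q0 : 0 <= Q by exact: sqr_ge0.
have X0 : 0 <= X / den.
  apply: divr_ge0; last exact: ltW den0.
  by rewrite /X; apply: addr_ge0; [apply: mulr_ge0; lra | exact: sqr_ge0].
have qp : norm2 (q - p) <= 2 * Num.sqrt (X / den).
  apply: le_n2.
  - by apply: mulr_ge0; [lra | exact: sqrtr_ge0].
  - rewrite exprMn (sqr_sqrtr X0) -/Q; apply: (le_trans Qb).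
    by apply: ler_wpM2r => //; rewrite expr2; lra.
  - exact: n2_ge0.
have tri : norm2 (p - ph) <= norm2 (q - p) + eps.
  have := n2_tri3 p q ph; rewrite (n2B p q) (n2B q ph); lra.
have mono : X / den <= (r * eps + eps ^+ 2) / (1 - (r + eps) / zeta).
  have denr : 0 < 1 - (r + eps) / zeta by rewrite subr_gt0 ltr_pdivrMr // mul1r; lra.
  have dd : 1 - (r + eps) / zeta <= den.
    have : (d + eps) / zeta <= (r + eps) / zeta by rewrite ler_pM2r ?invr_gt0 //; lra.
    rewrite /den; lra.
  apply: (@le_trans _ _ ((r * eps + eps ^+ 2) / den)).
    by rewrite ler_pM2r ?invr_gt0 // /X; nra.
  rewrite ler_pM2l ?lef_pV2 ?posrE //; nra.
split; first lra.
have := ler_wsqrtr mono; lra.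
Qed.
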